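(* Let $n\ge 2$, let $A\in\mathbb{R}^{n\times n}$ be symmetric positive definite, $B=A^{1/2}$, $E=\{x: x^{\top}A^{-1}x=1\}$, and for $x_0$ with $x_0^{\top}A^{-1}x_0=1$ set $y_0=B^{-1}x_0$. There exists a parallelepiped $P$ inscribed in $E$ having $x_0$ as a vertex with $L(P)=2^n\sqrt{\operatorname{tr}(A)}$ in each of the following cases: (a) $n=2$ and $x_0$ arbitrary on $E$; (b) $n\ge2$, $A$ is a scalar multiple of the identity, and $x_0$ arbitrary on $E$; (c) $n\ge 3$ and $y_0$ is an eigenvector of $A$.
   Context: A (centred, $n$-dimensional) parallelepiped with linearly independent edge vectors $v_1,\dots,v_n$ is $P=\{\sum_i t_iv_i:|t_i|\le\tfrac12\}$ with vertices $\tfrac12\sum_i\varepsilon_iv_i$, $\varepsilon\in\{\pm1\}^n$; it is inscribed in $E$ if all vertices satisfy $x^{\top}A^{-1}x=1$. $L(P)=2^{n-1}\sum_i\|v_i\|$ is the total edge length. *)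

(* Defs.v *)
From HB Require Import structures.
From mathcomp Require Import all_boot all_order all_algebra.
From mathcomp Require Import reals.
Set Implicit Arguments. Unset Strict Implicit. Unset Printing Implicit Defensive.
Import Order.TTheory GRing.Theory Num.Theory.
Local Open Scope ring_scope.

Definition qform (R : realType) (n : nat) (M : 'M[R]_n) (x : 'cV[R]_n) : R :=
  (x^T *m M *m x) 0 0.

Definition symmetric (R : realType) (n : nat) (M : 'M[R]_n) : Prop := M^T = M.

Definition pos_def (R : realType) (n : nat) (M : 'M[R]_n) : Prop :=
  symmetric M /\ forall x : 'cV[R]_n, x != 0 -> 0 < qform M x.

Definition enorm (R : realType) (n : nat) (v : 'cV[R]_n) : R :=
  Num.sqrt ((v^T *m v) 0 0).

Definition lin_indep (R : realType) (n : nat) (v : 'I_n -> 'cV[R]_n) : Prop :=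
  forall c : 'I_n -> R, \sum_(i < n) c i *: v i = 0 -> forall i, c i = 0.

Definition pvertex (R : realType) (n : nat) (v : 'I_n -> 'cV[R]_n)
    (e : 'I_n -> bool) : 'cV[R]_n :=
  2^-1 *: \sum_(i < n) ((-1) ^+ e i) *: v i.

Definition inscribed (R : realType) (n : nat) (A : 'M[R]_n)
    (v : 'I_n -> 'cV[R]_n) : Prop :=
  forall e : 'I_n -> bool, qform (invmx A) (pvertex v e) = 1.

Definition is_vertex (R : realType) (n : nat) (v : 'I_n -> 'cV[R]_n)
    (x : 'cV[R]_n) : Prop :=
  exists e : 'I_n -> bool, pvertex v e = x.

Definition edge_length (R : realType) (n : nat) (v : 'I_n -> 'cV[R]_n) : R :=
  2 ^+ n.-1 * \sum_(i < n) enorm (v i).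

(* Main.v *)
Require Import Defs.
From HB Require Import structures.
From mathcomp Require Import all_boot all_order all_algebra.
From mathcomp Require Import reals.
From mathcomp.algebra_tactics Require Import ring lra.
Import Order.TTheory GRing.Theory Num.Theory.
Local Open Scope ring_scope.

Section Helpers.
Set Implicit Arguments. Unset Strict Implicit.


Section Aux.
Variables (R : realType) (n : nat).
Implicit Types (M : 'M[R]_n) (x y z : 'cV[R]_n).

Definition bf M x y : R := (x^T *m M *m y) 0 0.

Lemma bfDl M x y z : bf M (x + y) z = bf M x z + bf M y z.
Proof. rewrite /bf linearD /= !mulmxDl. rewrite [LHS]mxE. by []. Qed.
Lemma bfDr M x y z : bf M z (x + y) = bf M z x + bf M z y.
Proof. by rewrite /bf !mulmxDr [LHS]mxE. Qed.
Lemma bfZl M a x y : bf M (a *: x) y = a * bf M x y.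
Proof. by rewrite /bf linearZ /= -!scalemxAl [LHS]mxE. Qed.
Lemma bfZr M a x y : bf M x (a *: y) = a * bf M x y.
Proof. by rewrite /bf -!scalemxAr [LHS]mxE. Qed.
Lemma bfNl M x y : bf M (- x) y = - bf M x y.
Proof. by rewrite -scaleN1r bfZl mulN1r. Qed.
Lemma bf0l M y : bf M 0 y = 0.
Proof. by rewrite -(scale0r 0) bfZl mul0r. Qed.
Lemma bf0r M y : bf M y 0 = 0.
Proof. by rewrite -(scale0r 0) bfZr mul0r. Qed.
Lemma bf_sumr M x (I : finType) (F : I -> 'cV[R]_n) :
  bf M x (\sum_i F i) = \sum_i bf M x (F i).
Proof.
apply: (big_ind2 (fun a b => bf M x a = b)); first exact: bf0r.
  by move=> a b c d <- <-; rewrite bfDr.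
by [].
Qed.
Lemma bf_suml M x (I : finType) (F : I -> 'cV[R]_n) :
  bf M (\sum_i F i) x = \sum_i bf M (F i) x.
Proof.
apply: (big_ind2 (fun a b => bf M a x = b)); first exact: bf0l.
  by move=> a b c d <- <-; rewrite bfDl.
by [].
Qed.
Lemma bfC M x y : M^T = M -> bf M x y = bf M y x.
Proof.
move=> hM; rewrite /bf; transitivity ((x^T *m M *m y)^T 0 0); first by rewrite [RHS]mxE.
by rewrite trmx_mul trmx_mul trmxK hM mulmxA.
Qed.
Lemma bf_qform M x : bf M x x = qform M x.
Proof. by []. Qed.

End Aux.


Section Iter.
Variables (R : realType) (n : nat) (A : 'M[R]_n) (y : 'cV[R]_n) (T : R).
Hypothesis symA : A^T = A.

Definition qq x := T * bf 1%:M y x ^+ 2 - bf A x x.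
Definition QQ x z := T * bf 1%:M y x * bf 1%:M y z - bf A x z.

Lemma qq_comb a b x z :
  qq (a *: x + b *: z) = a ^+ 2 * qq x + 2 * a * b * QQ x z + b ^+ 2 * qq z.
Proof.
rewrite /qq /QQ !bfDl !bfDr !bfZl !bfZr (bfC z x symA).
ring.
Qed.

Definition orthon (u : 'I_n -> 'cV[R]_n) :=
  forall k l, bf 1%:M (u k) (u l) = (k == l)%:R.

Definition rot (u : 'I_n -> 'cV[R]_n) i j c s k :=
  if k == i then c *: u i + s *: u j
  else if k == j then (- s) *: u i + c *: u j else u k.

Lemma rot_ortho u i j c s : i != j -> c ^+ 2 + s ^+ 2 = 1 -> orthon u ->
  orthon (rot u i j c s).
Proof.
move=> ij hcs ho k l; rewrite /rot.
have ji : j != i by rewrite eq_sym.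
have E : forall a b : 'I_n, a != b -> (a == b) = false by move=> a b /negbTE.
have [eki|ki] := eqVneq k i; [try rewrite eki|have [ekj|kj] := eqVneq k j; [try rewrite ekj|]];
(have [eli|li] := eqVneq l i; [try rewrite eli|have [elj|lj] := eqVneq l j; [try rewrite elj|]]);
rewrite ?eqxx ?(E _ _ ij) ?(E _ _ ji) ?(E _ _ ki) ?(E _ _ kj) ?(E _ _ li) ?(E _ _ lj);
rewrite ?bfDl ?bfDr ?bfZl ?bfZr ?ho ?eqxx ?(E _ _ ij) ?(E _ _ ji) ?(E _ _ ki) ?(E _ _ kj) ?(E _ _ li) ?(E _ _ lj);
rewrite ?[i == _]eq_sym ?[j == _]eq_sym ?(E _ _ ki) ?(E _ _ kj) ?(E _ _ li) ?(E _ _ lj) /=;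
try lra.
Qed.


Lemma rot_other u i j c s k : k != i -> k != j -> rot u i j c s k = u k.
Proof. by move=> ki kj; rewrite /rot (negbTE ki) (negbTE kj). Qed.

Lemma rot_j u i j c s : i != j -> rot u i j c s j = (- s) *: u i + c *: u j.
Proof. by move=> ij; rewrite /rot eq_sym (negbTE ij) eqxx. Qed.

Lemma rot_i u i j c s : rot u i j c s i = c *: u i + s *: u j.
Proof. by rewrite /rot eqxx. Qed.

Lemma rot_sum u i j c s : i != j -> c ^+ 2 + s ^+ 2 = 1 ->
  \sum_k qq (rot u i j c s k) = \sum_k qq (u k).
Proof.
move=> ij hcs.
have ji : j != i by rewrite eq_sym.
have key : qq (rot u i j c s i) + qq (rot u i j c s j) = qq (u i) + qq (u j).
  rewrite rot_i rot_j // !qq_comb.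
  transitivity ((c ^+ 2 + s ^+ 2) * (qq (u i) + qq (u j))); first ring.
  by rewrite hcs mul1r.
apply/eqP; rewrite -subr_eq0 -sumrB (bigD1 i) //= (bigD1 j) //= big1; last first.
  by move=> k /andP[ki kj]; rewrite rot_other // subrr.
apply/eqP; move: key; lra.
Qed.

Lemma root_lemma (a b d r : R) : d != 0 -> r ^+ 2 = b ^+ 2 - a * d ->
  a + 2 * ((- b - r) / d) * b + ((- b - r) / d) ^+ 2 * d = 0.
Proof.
move=> hd hr.
transitivity ((a * d + 2 * (- b - r) * b + (- b - r) ^+ 2) / d); first by field.
have -> : a * d + 2 * (- b - r) * b + (- b - r) ^+ 2 = a * d - b ^+ 2 + r ^+ 2 by ring.
rewrite hr; have -> : a * d - b ^+ 2 + (b ^+ 2 - a * d) = 0 by ring.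
by rewrite mul0r.
Qed.

Lemma cs_lemma (t r : R) : 0 < r -> r ^+ 2 = 1 + t ^+ 2 ->
  r^-1 ^+ 2 + (t * r^-1) ^+ 2 = 1.
Proof.
move=> hr hsq.
have hr0 : r != 0 by rewrite gt_eqF.
transitivity ((1 + t ^+ 2) / r ^+ 2); first by field.
by rewrite -hsq divff // expf_neq0.
Qed.

Lemma step u : orthon u -> \sum_k qq (u k) = 0 -> ~~ [forall k, qq (u k) == 0] ->
  exists u', [/\ orthon u', \sum_k qq (u' k) = 0 &
     (#|[set k | qq (u' k) != 0%R]| < #|[set k | qq (u k) != 0%R]|)%N].
Proof.
move=> ho hs /forallPn [k0 hk0].
have hpos : exists i, 0 < qq (u i).
  apply/existsP; apply: contraNT hk0 => /existsPn hn.
  have hle : forall k, 0 <= - qq (u k) by move=> k; rewrite oppr_ge0 leNgt hn.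
  have : \sum_k - qq (u k) = 0 by rewrite sumrN hs oppr0.
  move/psumr_eq0P => /(_ (fun k _ => hle k)) /(_ k0 isT) /eqP.
  by rewrite oppr_eq0.
have hneg : exists j, qq (u j) < 0.
  apply/existsP; apply: contraNT hk0 => /existsPn hn.
  have hle : forall k, 0 <= qq (u k) by move=> k; rewrite leNgt hn.
  by move/psumr_eq0P: hs => /(_ (fun k _ => hle k)) /(_ k0 isT) ->.
case: hpos => i hi; case: hneg => j hj.
have ij : i != j by apply/eqP => eij; move: hi; rewrite eij; lra.
set a := qq (u i); set d := qq (u j); set b := QQ (u i) (u j).
have hi' : 0 < a by [].
have hj' : d < 0 by [].
have ad : a * d < 0 by rewrite pmulr_rlt0.
have hD : 0 <= b ^+ 2 - a * d by have := sqr_ge0 b; lra.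
set t := (- b - Num.sqrt (b ^+ 2 - a * d)) / d.
have ht : a + 2 * t * b + t ^+ 2 * d = 0.
  apply: root_lemma; first by rewrite lt_eqF.
  exact: sqr_sqrtr.
have h1t : 0 < 1 + t ^+ 2 by nra.
set c := (Num.sqrt (1 + t ^+ 2))^-1; set s := t * c.
have hsq := sqr_sqrtr (ltW h1t).
have hsp : 0 < Num.sqrt (1 + t ^+ 2) by rewrite sqrtr_gt0.
have hcs : c ^+ 2 + s ^+ 2 = 1.
  by apply: cs_lemma.
exists (rot u i j c s); split.
- exact: rot_ortho.
- by rewrite rot_sum.
have hqi : qq (rot u i j c s i) = 0.
  rewrite rot_i qq_comb -/a -/b -/d /s.
  transitivity (c ^+ 2 * (a + 2 * t * b + t ^+ 2 * d)); first ring.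
  by rewrite ht mulr0.
rewrite (cardsD1 i [set k | qq (u k) != 0]) inE (gt_eqF hi) /= add1n ltnS.
apply: subset_leq_card; apply/subsetP => k; rewrite !inE.
have [->|ki] := eqVneq k i; first by rewrite hqi eqxx.
have [->|kj] := eqVneq k j; first by rewrite (lt_eqF hj).
by rewrite rot_other.
Qed.

Lemma zero_diag m u : orthon u -> \sum_k qq (u k) = 0 ->
  (#|[set k | qq (u k) != 0%R]| <= m)%N ->
  exists u', orthon u' /\ forall k, qq (u' k) = 0.
Proof.
elim: m u => [|m IH] u ho hs hc.
  exists u; split => // k; apply/eqP; apply: contraTT hc => hk.
  by rewrite -ltnNge card_gt0; apply/set0Pn; exists k; rewrite inE.
have [/forallP hall|hn] := boolP [forall k, qq (u k) == 0].
  by exists u; split => // k; apply/eqP.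
have [u' [ho' hs' hc']] := step ho hs hn.
apply: (IH u' ho' hs'); rewrite -ltnS; exact: leq_trans hc' hc.
Qed.

End Iter.


Section Fin.
Variables (R : realType) (n : nat).

Lemma bf1E (x z : 'cV[R]_n) : bf 1%:M x z = \sum_r x r 0 * z r 0.
Proof. by rewrite /bf mulmx1 mxE; apply: eq_bigr => r _; rewrite mxE. Qed.

Lemma bf_col1 (k l : 'I_n) : bf 1%:M (col k (1%:M : 'M[R]_n)) (col l 1%:M) = (k == l)%:R.
Proof.
rewrite bf1E (bigD1 k) //= big1 ?addr0; last first.
  by move=> r rk; rewrite !mxE (negbTE rk) mul0r.
by rewrite !mxE eqxx mul1r.
Qed.

Lemma bf_y_col (y : 'cV[R]_n) k : bf 1%:M y (col k 1%:M) = y k 0.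
Proof.
rewrite bf1E (bigD1 k) //= big1 ?addr0; last first.
  by move=> r rk; rewrite !mxE (negbTE rk) mulr0.
by rewrite !mxE eqxx mulr1.
Qed.

Lemma bf_col_A (A : 'M[R]_n) k : bf A (col k 1%:M) (col k 1%:M) = A k k.
Proof.
rewrite /bf tr_col trmx1 -row_mul mul1mx mxE (bigD1 k) //= big1 ?addr0.
  by rewrite !mxE eqxx mulr1.
by move=> r rk; rewrite !mxE (negbTE rk) mulr0.
Qed.

Lemma ortho_sum_l (u : 'I_n -> 'cV[R]_n) (a : 'I_n -> R) l : orthon u ->
  bf 1%:M (\sum_k a k *: u k) (u l) = a l.
Proof.
move=> ho; rewrite bf_suml (bigD1 l) //= big1 ?addr0; last first.
  by move=> k kl; rewrite bfZl ho (negbTE kl) mulr0.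
by rewrite bfZl ho eqxx mulr1.
Qed.

Lemma ortho_sum2 (u : 'I_n -> 'cV[R]_n) (a b : 'I_n -> R) : orthon u ->
  bf 1%:M (\sum_k a k *: u k) (\sum_k b k *: u k) = \sum_k a k * b k.
Proof.
move=> ho; rewrite bf_sumr; apply: eq_bigr => k _.
by rewrite bfZr ortho_sum_l // mulrC.
Qed.

Lemma ortho_complete (u : 'I_n -> 'cV[R]_n) (y : 'cV[R]_n) : orthon u ->
  y = \sum_k bf 1%:M y (u k) *: u k.
Proof.
move=> ho.
pose U := \matrix_(r, k) u k r 0.
have hU : U^T *m U = 1%:M.
  apply/matrixP => k l; rewrite !mxE -ho bf1E.
  by apply: eq_bigr => r _; rewrite !mxE.
have hU' := mulmx1C hU.
transitivity (U *m (U^T *m y)); first by rewrite mulmxA hU' mul1mx.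
apply/matrixP => r c; rewrite (ord1 c).
rewrite mxE summxE.
apply: eq_bigr => k _; rewrite !mxE bf1E mulrC; congr (_ * _).
by apply: eq_bigr => s _; rewrite !mxE mulrC.
Qed.

Lemma sumB (B : 'M[R]_n) (u : 'I_n -> 'cV[R]_n) (a : 'I_n -> R) :
  \sum_k a k *: (B *m u k) = B *m \sum_k a k *: u k.
Proof. by rewrite mulmx_sumr; apply: eq_bigr => k _; rewrite scalemxAr. Qed.

End Fin.

End Helpers.


Theorem corollary3p4 (R : realType) (n : nat) (A B : 'M[R]_n) (x0 : 'cV[R]_n) :
  (2 <= n)%N ->
  pos_def A ->
  pos_def B -> B *m B = A ->
  qform (invmx A) x0 = 1 ->
  [\/ n = 2%N,
      (exists c : R, A = c%:M) |
      (3 <= n)%N /\ invmx B *m x0 != 0 /\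
        (exists lam : R, A *m (invmx B *m x0) = lam *: (invmx B *m x0))] ->
  exists v : 'I_n -> 'cV[R]_n,
    [/\ lin_indep v, inscribed A v, is_vertex v x0 &
        edge_length v = 2 ^+ n * Num.sqrt (\tr A)].
Proof.
move=> hn [symA pdA] [symB pdB] hBB hx0 _.
have hBu : B \in unitmx.
  rewrite -row_free_unit; apply: inj_row_free => w hw.
  apply/eqP; apply: contraT => wn0.
  have := pdB w^T; rewrite trmx_eq0 => /(_ wn0).
  by rewrite /qform trmxK hw mul0mx mxE ltxx.
have hAu : A \in unitmx by rewrite -hBB unitmx_mul hBu.
have key : B^T *m invmx A *m B = 1%:M.
  rewrite symB.
  have h1 : invmx A *m B *m B = 1%:M by rewrite -mulmxA hBB mulVmx.
  have h2 : B *m invmx A *m B *m B = B by rewrite -!mulmxA hBB mulVmx // mulmx1.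
  by rewrite -[LHS](mulmxK hBu) h2 mulmxV.
have qfB : forall z, qform (invmx A) (B *m z) = bf 1%:M z z.
  move=> z; rewrite /qform /bf trmx_mul mulmx1.
  by rewrite -!mulmxA (mulmxA B^T) (mulmxA (B^T *m invmx A)) key mul1mx.
set y := invmx B *m x0.
have hx0y : x0 = B *m y by rewrite /y mulmxA mulmxV // mul1mx.
have hy1 : bf 1%:M y y = 1 by rewrite -qfB -hx0y.
set T := \tr A.
pose u0 := fun k : 'I_n => col k (1%:M : 'M[R]_n).
have ho0 : orthon u0 by move=> k l; exact: bf_col1.
have hs0 : \sum_k qq A y T (u0 k) = 0.
  rewrite /qq sumrB -mulr_sumr.
  have -> : \sum_k bf 1%:M y (u0 k) ^+ 2 = 1.
    rewrite -[RHS]hy1 bf1E; apply: eq_bigr => k _; by rewrite /u0 bf_y_col expr2.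
  rewrite mulr1 /T /mxtrace; apply/eqP; rewrite subr_eq0; apply/eqP.
  by apply: eq_bigr => k _; rewrite /u0 bf_col_A.
have hc0 : (#|[set k | qq A y T (u0 k) != 0%R]| <= n)%N.
  by rewrite -[X in (_ <= X)%N]card_ord max_card.
have [u [ho hq]] := zero_diag symA ho0 hs0 hc0.
pose w := fun k => bf 1%:M y (u k).
have hyu : y = \sum_k w k *: u k by exact: ortho_complete.
have hw2 : \sum_k w k ^+ 2 = 1.
  rewrite -[RHS]hy1 [in RHS]hyu ortho_sum2 //; apply: eq_bigr => k _; by rewrite expr2.
have hAu' : forall k, bf A (u k) (u k) = T * w k ^+ 2.
  by move=> k; move: (hq k); rewrite /qq -/(w k); lra.
have hpos : forall k, 0 < bf A (u k) (u k).
  move=> k; apply: pdA; apply/eqP => uk0.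
  by move: (ho k k); rewrite uk0 bf0l eqxx => /eqP; rewrite eq_sym oner_eq0.
have hwn0 : forall k, w k != 0.
  move=> k; apply/eqP => wk0; move: (hpos k); rewrite hAu' wk0; lra.
have i0 : 'I_n by exists 0%N; case: n hn {hBu hAu hc0 u0 ho0 hs0 u ho hq w hyu hw2 hAu' hpos hwn0 A B x0 symA pdA symB pdB hBB hx0 key qfB y hx0y hy1 T}.
have hT : 0 <= T.
  have := hpos i0; rewrite hAu' => h.
  have := sqr_ge0 (w i0); set s := w i0 ^+ 2 in h *; nra.
have hBz : forall z, bf 1%:M (B *m z) (B *m z) = bf A z z.
  by move=> z; rewrite /bf mulmx1 trmx_mul symB -hBB !mulmxA.
pose v := fun k => (2 * w k) *: (B *m u k).
have hpv : forall e, pvertex v e = B *m \sum_k ((-1) ^+ e k * w k) *: u k.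
  move=> e; rewrite /pvertex -sumB scaler_sumr; apply: eq_bigr => k _.
  by rewrite /v !scalerA; congr (_ *: _); field.
exists v; split.
- move=> c hc l.
  have hB0 : B *m \sum_k (c k * (2 * w k)) *: u k = 0.
    by rewrite -sumB -[RHS]hc; apply: eq_bigr => k _; rewrite /v scalerA.
  have hz : \sum_k (c k * (2 * w k)) *: u k = 0.
    by rewrite -[LHS](mulKmx hBu) hB0 mulmx0.
  have := ortho_sum_l (fun k => c k * (2 * w k)) l ho; rewrite hz bf0l => /esym /eqP.
  rewrite mulf_eq0 => /orP[/eqP // |]; rewrite mulf_eq0 (negbTE (hwn0 l)) orbF => /eqP h2.
  by move: h2; lra.
- move=> e; rewrite hpv qfB ortho_sum2 //; rewrite -[RHS]hw2; apply: eq_bigr => k _.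
  by case: (e k); rewrite /= ?expr1 ?expr0; ring.
- exists (fun _ => false); rewrite hpv hx0y [in RHS]hyu.
  by congr (_ *m _); apply: eq_bigr => k _; rewrite expr0 mul1r.
rewrite /edge_length.
have -> : \sum_k enorm (v k) = \sum_k (2 * Num.sqrt T) * w k ^+ 2.
  apply: eq_bigr => k _; rewrite /enorm.
  have -> : (v k)^T *m v k = (v k)^T *m 1%:M *m v k by rewrite mulmx1.
  rewrite -/(bf 1%:M (v k) (v k)) /v bfZl bfZr hBz hAu'.
  have -> : 2 * w k * (2 * w k * (T * w k ^+ 2)) = (2 * w k ^+ 2) ^+ 2 * T by ring.
  rewrite sqrtrM ?sqr_ge0 // sqrtr_sqr ger0_norm; last first.
    by apply: mulr_ge0 => //; exact: sqr_ge0.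
  by rewrite mulrAC.
rewrite -mulr_sumr hw2 mulr1.
have hn0 : (0 < n)%N by apply: leq_trans hn.
rewrite -[in RHS](prednK hn0) exprS; ring.
Qed.
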